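(* Every topological space $X$ that admits a selection map has the universal fixed point property. Conversely, if $X$ is a topological space with the universal fixed point property for which the evaluation map $C(X,X)\times X\to X$, $(f,x)\mapsto f(x)$, is continuous, then $X$ admits a selection map.
   Context: For a topological space $X$, let $C(X,X)$ be the set of continuous self-maps of $X$ with the compact-open topology (generated by the sets $\{g\mid g(K)\subseteq U\}$, $K\subseteq X$ compact, $U\subseteq X$ open). A selection map for $X$ is a continuous map $\Phi\colon C(X,X)\to X$ such that $f(\Phi(f))=\Phi(f)$ for all $f\in C(X,X)$. The space $X$ has the universal fixed point property if for every topological space $T$ and every continuous map $f\colon T\times X\to X$ there exists a continuous map $p\colon T\to X$ with $f(t,p(t))=p(t)$ for all $t\in T$. *)

(* Defs.v *)
From HB Require Import structures.
From mathcomp Require Import all_boot all_order all_algebra.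
From mathcomp Require Import all_classical all_reals all_analysis.
Set Implicit Arguments. Unset Strict Implicit. Unset Printing Implicit Defensive.
Local Open Scope classical_set_scope.

(* The space of all self-maps of X with the compact-open topology
   (mathcomp-analysis' [compact_open]); C(X,X) is the subspace of continuous
   maps, handled via [{within @cmaps X, continuous _}]. *)
Definition cmaps (X : topologicalType) : set {compact-open, X -> X} :=
  [set f | continuous f].

Definition selection_map (X : topologicalType) (Phi : {compact-open, X -> X} -> X) : Prop :=
  {within @cmaps X, continuous Phi} /\
  (forall f : {compact-open, X -> X}, continuous f -> f (Phi f) = Phi f).

Definition admits_selection_map (X : topologicalType) : Prop :=
  exists Phi : {compact-open, X -> X} -> X, selection_map Phi.

Definition universal_fixed_point_property (X : topologicalType) : Prop :=
  forall (T : topologicalType) (f : T * X -> X), continuous f ->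
    exists p : T -> X, continuous p /\ (forall t, f (t, p t) = p t).

Definition evaluation_continuous (X : topologicalType) : Prop :=
  {within [set fx : {compact-open, X -> X} * X | continuous fx.1],
    continuous (fun fx : {compact-open, X -> X} * X => fx.1 fx.2)}.

(* Main.v *)
Require Import Defs.
From HB Require Import structures.
From mathcomp Require Import all_boot all_order all_algebra.
From mathcomp Require Import all_classical all_reals all_analysis.
Local Open Scope classical_set_scope.

Lemma part1 (X : topologicalType) : admits_selection_map X -> universal_fixed_point_property X.
Proof.
move=> [Phi [cPhi fixPhi]] T f cf.
have cc : continuous (curry f : T -> {compact-open, X -> X}).
  by have [] := (@continuous_curry T X X f cf).
have cu : forall t, continuous (curry f t).
  by have [] := (@continuous_curry T X X f cf).
exists (fun t => Phi (curry f t : {compact-open, X -> X})); split.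
  move=> t W /= Wn.
  have := cPhi (curry f t : {compact-open, X -> X}) W Wn.
  rewrite /= nbhs_simpl /=.
  have E := @nbhs_subspace_in _ (@cmaps X) (curry f t) (cu t).
  move=> H; have {H}: within (@cmaps X) (nbhs (curry f t : {compact-open, X -> X})) (Phi @^-1` W) by rewrite E.
  rewrite /within => H; have := cc t _ H; rewrite /= nbhs_simpl /=; apply: filterS => s; apply; exact: cu.
by move=> t; exact: (fixPhi _ (cu t)).
Qed.
Lemma part2 (X : topologicalType) : universal_fixed_point_property X -> evaluation_continuous X ->
     admits_selection_map X.
Proof.
move=> ufp ev.
pose S := @cmaps X.
pose F := fun gx : subspace S * X => if `[< continuous (gx.1 : X -> X) >] then gx.1 gx.2 else gx.2.
have cF : continuous F.
  move=> [g x] W.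
  rewrite /F /=; case: (asboolP (continuous (g : X -> X))) => cg Wn.
    have := ev (g, x) W Wn.
    case: (nbhs_subspaceP [set fx : {compact-open, X -> X} * X | continuous fx.1] (g, x)) => //= _.
    move=> [[P Q] /= [nP nQ] PQW].
    exists (P `&` S, Q) => /=.
      split => //.
      case: (nbhs_subspaceP S g) => // Sg.
      rewrite /within /=; apply: filterS nP => h Ph Sh; by split.
    move=> [h y] [/= [Ph Sh] Qy]; rewrite /=.
    case: asboolP => // _; exact: (PQW (h, y)).
  exists ([set g], W) => /=.
    split => //.
    case: (nbhs_subspaceP S g) => // Sg; by move=> h ->.
  move=> [h y] [/= -> Wy]; rewrite /=.
  by case: asboolP.
have [p [cp fixp]] := ufp (subspace S) F cF.
exists p; split; first exact: cp.
move=> g cg; have := fixp g; rewrite /F /=.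
by case: asboolP.
Qed.

Theorem theorem7p3 :
  (forall X : topologicalType,
     admits_selection_map X -> universal_fixed_point_property X) /\
  (forall X : topologicalType,
     universal_fixed_point_property X -> evaluation_continuous X ->
     admits_selection_map X).
Proof. split; [exact: part1 | exact: part2]. Qed.
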